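(* Let $G$ be a finite simple graph with no isolated edges and maximum degree $\Delta$. Let $G'$ be the multigraph obtained from $G$ by contracting every edge $uv$ of $G$ such that $\deg(u)<\Delta/3$, $\deg(v)<\Delta/3$, and neither $u$ nor $v$ has any neighbor other than each other of degree less than $\Delta/3$ (contracting means deleting $uv$ and identifying $u$ and $v$ into one vertex). Then $G'$ is a loopless multigraph with edge multiplicity at most $2$, $\Delta(G')=\Delta$, and the subgraph $H$ of $G'$ induced by the vertices of degree less than $\Delta/3$ in $G'$ has no isolated edges. Moreover, for every positive integer $p$, if $G'$ has an avd-coloring using at most $p$ colors, then so does $G$.
   Context: For a (partial) edge coloring $c$ and a vertex $v$, $S_c(v)$ denotes the set of colors on the colored edges incident to $v$. An avd-coloring of a (multi)graph is a proper edge coloring $c$ (edges sharing an endpoint, including parallel edges, get distinct colors) such that $S_c(u)\neq S_c(v)$ for all adjacent vertices $u,v$. *)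

(* Defs.v *)
From mathcomp Require Import all_boot.
Set Implicit Arguments. Unset Strict Implicit. Unset Printing Implicit Defensive.

(** * Simple graphs: [e : rel T] on a finType, symmetric and irreflexive. *)
Section Simple.
Variables (T : finType) (e : rel T).

Definition deg (u : T) : nat := #|[set v | e u v]|.
Definition maxdeg : nat := \max_(u : T) deg u.
Definition low (u : T) : bool := 3 * deg u < maxdeg.

Definition no_isolated_edge : Prop :=
  forall u v, e u v -> ~~ ((deg u == 1) && (deg v == 1)).

Definition contr (u v : T) : bool :=
  [&& e u v, low u, low v,
      [forall w, (e u w && (w != v)) ==> ~~ low w] &
      [forall w, (e v w && (w != u)) ==> ~~ low w]].

(* avd-coloring of the simple graph with colors in {0,..,p-1};
   c u v is the color of the edge uv *)
Definition avd_simple (p : nat) : Prop :=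
  exists c : T -> T -> 'I_p,
    [/\ (forall u v, e u v -> c u v = c v u),
        (forall u v w, e u v -> e u w -> v != w -> c u v != c u w) &
        (forall u v, e u v ->
           c u @: [set w | e u w] != c v @: [set w | e v w])].
End Simple.

Record mgraph := MGraph {
  mV : finType;
  mE : finType;
  msrc : mE -> mV;
  mdst : mE -> mV }.

Section Multi.
Variable M : mgraph.

Definition mends (f : mE M) : {set mV M} := [set msrc f; mdst f].
Definition inc (x : mV M) (f : mE M) : bool := (msrc f == x) || (mdst f == x).

(* degree, loops counted twice *)
Definition mdeg (x : mV M) : nat :=
  #|[set f | msrc f == x]| + #|[set f | mdst f == x]|.
Definition mmaxdeg : nat := \max_(x : mV M) mdeg x.

Definition loopless : Prop := forall f : mE M, msrc f != mdst f.

Definition mult_le2 : Prop :=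
  forall x y : mV M, x != y ->
    #|[set f | ((msrc f == x) && (mdst f == y)) || ((msrc f == y) && (mdst f == x))]| <= 2.

Definition mlow (D : nat) (x : mV M) : bool := 3 * mdeg x < D.

(* the subgraph H induced by vertices with degree < D/3 has no isolated edge,
   i.e. no component consisting of two vertices joined by (one or more) edges *)
Definition low_sub_no_isolated_edge (D : nat) : Prop :=
  forall f : mE M, mlow D (msrc f) -> mlow D (mdst f) ->
    exists g : mE M,
      [&& mlow D (msrc g), mlow D (mdst g),
          inc (msrc f) g || inc (mdst f) g & mends g != mends f].

Definition avd_multi (p : nat) : Prop :=
  exists c : mE M -> 'I_p,
    (forall f g : mE M, f != g ->
       (inc (msrc f) g || inc (mdst f) g) -> c f != c g) /\
    (forall f : mE M,
       c @: [set g | inc (msrc f) g] != c @: [set g | inc (mdst f) g]).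
End Multi.

(** M is (up to isomorphism) the multigraph obtained from the simple graph (T,e)
    by contracting every edge uv with [contr e u v]:
    phi maps vertices of G onto vertices of M, identifying exactly the endpoints
    of contracted edges, and psi is a bijection from the edges of M onto the
    (unordered) non-contracted edges of G compatible with endpoints. *)
Definition is_contraction (T : finType) (e : rel T) (M : mgraph) : Prop :=
  exists (phi : T -> mV M) (psi : mE M -> T * T),
    [/\ (forall x : mV M, exists u, phi u = x),
        (forall u v, phi u = phi v <-> (u = v \/ contr e u v)),
        (forall f, [/\ e (psi f).1 (psi f).2, ~~ contr e (psi f).1 (psi f).2,
                       phi (psi f).1 = msrc f & phi (psi f).2 = mdst f]),
        (forall u v, e u v -> ~~ contr e u v ->
           exists f, psi f = (u, v) \/ psi f = (v, u)) &
        (forall f g, psi f = psi g \/ psi f = ((psi g).2, (psi g).1) -> f = g)].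

(* Main.v *)
Require Import Defs.
From mathcomp Require Import all_boot zify.
Set Implicit Arguments. Unset Strict Implicit. Unset Printing Implicit Defensive.

Section Pf.
Variables (T : finType) (e : rel T).
Hypotheses (esymm : symmetric e) (eirr : irreflexive e).
Variables (M : mgraph) (phi : T -> mV M) (psi : mE M -> T * T).
Hypotheses (phiS : forall x : mV M, exists u, phi u = x)
  (phiE : forall u v, phi u = phi v <-> (u = v \/ contr e u v))
  (psiP : forall f, [/\ e (psi f).1 (psi f).2, ~~ contr e (psi f).1 (psi f).2,
                       phi (psi f).1 = msrc f & phi (psi f).2 = mdst f])
  (psiS : forall u v, e u v -> ~~ contr e u v ->
           exists f, psi f = (u, v) \/ psi f = (v, u))
  (psiI : forall f g, psi f = psi g \/ psi f = ((psi g).2, (psi g).1) -> f = g).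

Local Notation D := (maxdeg e).

Lemma contrC u v : contr e u v = contr e v u.
Proof.
rewrite /contr esymm.
by case: (e v u); case: (low e u); case: (low e v); case: [forall w, _]; case: [forall w, _].
Qed.

Lemma contr_e u v : contr e u v -> e u v.
Proof. by case/and5P. Qed.

Lemma contr_low u v : contr e u v -> low e u.
Proof. by case/and5P. Qed.

Lemma contr_nlow u v w : contr e u v -> e u w -> w != v -> ~~ low e w.
Proof.
case/and5P=> _ _ _ /forallP H _ euw wv.
by move: (H w); rewrite euw wv.
Qed.

Lemma contr_uniq u v w : contr e u v -> contr e u w -> v = w.
Proof.
move=> cuv cuw; apply/eqP; apply: contraT => vw.
have := contr_nlow cuw (contr_e cuv) vw.
by rewrite contrC in cuv; rewrite (contr_low cuv).
Qed.

Definition matched u := exists v, contr e u v.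

Lemma phi_eq_unm u w : ~ matched u -> phi w = phi u -> w = u.
Proof.
move=> nm /phiE [//|c]; exfalso; apply: nm; exists w; by rewrite contrC.
Qed.

Lemma phi_eq_m u u' w : contr e u u' -> phi w = phi u -> w = u \/ w = u'.
Proof.
move=> cu /phiE [->|c]; first by left.
right; apply: esym; apply: (contr_uniq cu); by rewrite contrC.
Qed.

Lemma matched_nlow_nb p q : matched p -> e p q -> ~~ contr e p q -> ~~ low e q.
Proof.
case=> p' cp epq nc; apply: (contr_nlow cp epq).
by apply: contraNneq nc => ->.
Qed.

Lemma matched_low p : matched p -> low e p.
Proof. by case=> v /contr_low. Qed.

Lemma loop (f : mE M) : msrc f != mdst f.
Proof.
case: (psiP f) => H1 H2 <- <-; apply/eqP => /phiE [E|c].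
  by move: H1; rewrite E eirr.
by rewrite c in H2.
Qed.

Definition Su u := [set f | ((psi f).1 == u) || ((psi f).2 == u)].
Definition oth u f := if (psi f).1 == u then (psi f).2 else (psi f).1.

Lemma Su_form u f : f \in Su u -> psi f = (u, oth u f) \/ psi f = (oth u f, u).
Proof.
rewrite inE /oth; case: (psi f) => a b /=.
by case: eqP => [->|_] /=; [left | move/eqP ->; right].
Qed.

Lemma psi_inj2 f g u v : (psi f = (u,v) \/ psi f = (v,u)) ->
  (psi g = (u,v) \/ psi g = (v,u)) -> f = g.
Proof.
move=> Hf Hg; apply: psiI.
by case: Hf => ->; case: Hg => -> /=; [left|right|right|left].
Qed.

Lemma oth_e u f : f \in Su u -> e u (oth u f).
Proof.
move=> /Su_form; case: (psiP f) => H _ _ _.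
by case=> E; rewrite E /= in H => //; rewrite esymm.
Qed.

Lemma oth_inj u : {in Su u &, injective (oth u)}.
Proof.
move=> f g /Su_form Hf /Su_form Hg E; rewrite E in Hf.
exact: psi_inj2 Hf Hg.
Qed.

Lemma Su_le u : #|Su u| <= deg e u.
Proof.
rewrite -(card_in_imset (oth_inj (u:=u))) /deg.
apply: subset_leq_card; apply/subsetP => v /imsetP [f Hf ->].
by rewrite inE oth_e.
Qed.

Lemma Su_eq u : ~ matched u -> #|Su u| = deg e u.
Proof.
move=> nm; apply/eqP; rewrite eqn_leq Su_le /=.
rewrite -(card_in_imset (oth_inj (u:=u))) /deg.
apply: subset_leq_card; apply/subsetP => v; rewrite inE => euv.
have nc : ~~ contr e u v by apply/negP => c; apply: nm; exists v.
case: (psiS euv nc) => f Hf.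
have fS : f \in Su u by rewrite inE; case: Hf => ->; rewrite eqxx ?orbT.
apply/imsetP; exists f => //.
rewrite /oth; case: Hf => -> /=; first by rewrite eqxx.
case: eqP => // vu; by move: euv; rewrite vu eirr.
Qed.

Lemma inc_Su u f : f \in Su u -> inc (phi u) f.
Proof.
rewrite inE /inc; case: (psiP f) => _ _ <- <-.
by case/orP => /eqP ->; rewrite eqxx ?orbT.
Qed.

Lemma incP x f : inc x f -> exists w, phi w = x /\ f \in Su w.
Proof.
rewrite /inc; case: (psiP f) => _ _ <- <- /orP [] /eqP <-.
  by exists (psi f).1; rewrite inE eqxx.
by exists (psi f).2; rewrite inE eqxx orbT.
Qed.

Lemma inc_single u : ~ matched u -> [set f | inc (phi u) f] = Su u.
Proof.
move=> nm; apply/setP => f; rewrite inE; apply/idP/idP; last exact: inc_Su.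
by case/incP => w [/(phi_eq_unm nm) -> ].
Qed.

Lemma inc_pair u u' : contr e u u' -> [set f | inc (phi u) f] = Su u :|: Su u'.
Proof.
move=> c; apply/setP => f; rewrite inE in_setU; apply/idP/idP.
  by case/incP => w [/(phi_eq_m c) [->|->] ->]; rewrite ?orbT.
have -> : phi u = phi u' by apply/phiE; right.
case/orP => H; last exact: inc_Su.
by rewrite -(proj2 (phiE u u')) ?inc_Su //; right.
Qed.

Lemma mdeg_inc (x : mV M) : mdeg x = #|[set f | inc x f]|.
Proof.
have -> : [set f | inc x f] = [set f | msrc f == x] :|: [set f | mdst f == x].
  by apply/setP => f; rewrite !inE.
rewrite -[RHS]addn0.
have <- : #|[set f | msrc f == x] :&: [set f | mdst f == x]| = 0.
  apply/eqP; rewrite cards_eq0; apply/eqP/setP => f; rewrite !inE.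
  by apply/negP => /andP [/eqP a /eqP b]; move: (loop f); rewrite a b eqxx.
by rewrite cardsUI.
Qed.

Lemma mdeg_single u : ~ matched u -> mdeg (phi u) = deg e u.
Proof. by move=> nm; rewrite mdeg_inc inc_single // Su_eq. Qed.

Lemma mdeg_pair u u' : contr e u u' -> #|[set f | inc (phi u) f]| <= deg e u + deg e u'.
Proof.
move=> c; rewrite (inc_pair c).
apply: leq_trans (leq_add (Su_le u) (Su_le u')).
by rewrite -cardsUI leq_addr.
Qed.


Lemma matchedP u : reflect (matched u) [exists v, contr e u v].
Proof. by apply: (iffP existsP). Qed.

Lemma matched_class a p : matched a -> phi p = phi a -> matched p.
Proof.
case=> a' c /(phi_eq_m c) [->|->]; first by exists a'.
by exists a; rewrite contrC.
Qed.

Lemma class_card (x : mV M) : #|[set w | phi w == x]| <= 2.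
Proof.
case: (phiS x) => a <-.
case: (boolP [exists v, contr e a v]) => [/existsP [a' c] | /existsPn H].
  apply: leq_trans (_ : #|[set a; a']| <= 2); last by rewrite cards2; case: (a != a').
  apply: subset_leq_card; apply/subsetP => w; rewrite !inE.
  by move/eqP/(phi_eq_m c) => [->|->]; rewrite eqxx ?orbT.
have nm : ~ matched a by case=> v c; move: (H v); rewrite c.
apply: leq_trans (_ : #|[set a]| <= 2); last by rewrite cards1.
apply: subset_leq_card; apply/subsetP => w; rewrite !inE.
by move/eqP/(phi_eq_unm nm) ->.
Qed.

Definition Aset (x y : mV M) :=
  [set f | ((msrc f == x) && (mdst f == y)) || ((msrc f == y) && (mdst f == x))].

Lemma mult_aux x b : ~ matched b -> x != phi b -> #|Aset x (phi b)| <= 2.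
Proof.
move=> nm xb.
have sub : Aset x (phi b) \subset Su b.
  apply/subsetP => f; rewrite inE => H; rewrite -inc_single // inE /inc.
  by case/orP: H => /andP [/eqP -> /eqP ->]; rewrite eqxx ?orbT.
have inj : {in Aset x (phi b) &, injective (oth b)}.
  move=> f g Hf Hg; apply: oth_inj; exact: (subsetP sub).
rewrite -(card_in_imset inj); apply: leq_trans (class_card x).
apply: subset_leq_card; apply/subsetP => o /imsetP [f Hf ->]; rewrite inE.
have Hs := subsetP sub f Hf.
move: Hf; rewrite inE; case: (psiP f) => _ _ <- <-.
case: (Su_form Hs) => -> /=.
  by case/orP => /andP [/eqP E1 /eqP E2]; [move: xb; rewrite -E1 eqxx | rewrite E2].
by case/orP => /andP [/eqP E1 /eqP E2]; [rewrite E1 | move: xb; rewrite -E2 eqxx].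
Qed.

Lemma mult2 : mult_le2 M.
Proof.
move=> x y xy; change (#|Aset x y| <= 2).
case: (phiS x) => a ea; case: (phiS y) => b eb.
case: (boolP [exists v, contr e b v]) => [/matchedP mb | /matchedP nmb];
  last by rewrite -eb; apply: mult_aux => //; rewrite eb.
case: (boolP [exists v, contr e a v]) => [/matchedP ma | /matchedP nma].
  suff -> : Aset x y = set0 by rewrite cards0.
  apply/setP => f; rewrite !inE; apply/negP => H.
  case: (psiP f) => epq nc Es Ed.
  have mp : matched (psi f).1.
    case/orP: H => /andP [/eqP E1 _]; move: E1; rewrite -Es.
      by rewrite -ea; apply: matched_class.
    by rewrite -eb; apply: matched_class.
  have mq : matched (psi f).2.
    case/orP: H => /andP [_ /eqP E1]; move: E1; rewrite -Ed.
      by rewrite -eb; apply: matched_class.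
    by rewrite -ea; apply: matched_class.
  by move: (matched_nlow_nb mp epq nc); rewrite matched_low.
have -> : Aset x y = Aset y x by apply/setP => f; rewrite !inE orbC.
rewrite -ea; apply: mult_aux => //; by rewrite ea eq_sym.
Qed.

Lemma maxdeg_eq : mmaxdeg M = D.
Proof.
apply/eqP; rewrite eqn_leq; apply/andP; split.
  apply/bigmax_leqP => x _; case: (phiS x) => u <-.
  case: (boolP [exists v, contr e u v]) => [/existsP [u' c] | /matchedP nm];
    last by rewrite mdeg_single //; apply: leq_bigmax.
  rewrite mdeg_inc; apply: leq_trans (mdeg_pair c) _.
  have l1 := contr_low c; rewrite contrC in c; have l2 := contr_low c.
  move: l1 l2; rewrite /low; lia.
case: (posnP D) => [->//|Dpos].
have : 0 < #|T|.
  case: (pickP (@predT T)) => [w0 _ | none]; first by apply/card_gt0P; exists w0.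
  move: Dpos; rewrite /maxdeg big_pred0 //.
case/(eq_bigmax (deg e)) => w Hw.
have nm : ~ matched w.
  move/matched_low; rewrite /low /maxdeg Hw; lia.
rewrite /maxdeg Hw -mdeg_single //; apply: leq_bigmax.
Qed.

Lemma low_nb_aux a b w : ~ matched a -> ~ matched b -> e a b -> e a w -> w != b ->
  low e w -> low e a ->
  exists g : mE M, [/\ mlow D (msrc g), mlow D (mdst g), inc (phi a) g,
       phi w \in mends g & phi w \notin [set phi a; phi b]].
Proof.
move=> nma nmb eab eaw wb lw la.
have nmw : ~ matched w.
  case=> w' c; have ewa : e w a by rewrite esymm.
  case: (eqVneq a w') => [E|ne]; first by apply: nma; exists w; rewrite contrC E.
  by move: (contr_nlow c ewa ne); rewrite la.
have nc : ~~ contr e a w by apply/negP => c; apply: nma; exists w.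
case: (psiS eaw nc) => g Hg.
have lo : forall z, z = a \/ z = w -> mlow D (phi z).
  move=> z [->|->]; rewrite /mlow mdeg_single //.
exists g; split.
- case: (psiP g) => _ _ <- _; apply: lo; by case: Hg => ->; [left|right].
- case: (psiP g) => _ _ _ <-; apply: lo; by case: Hg => ->; [right|left].
- apply: inc_Su; rewrite inE; by case: Hg => ->; rewrite eqxx ?orbT.
- rewrite /mends; case: (psiP g) => _ _ <- <-; rewrite !inE.
  by case: Hg => ->; rewrite eqxx ?orbT.
rewrite !inE; apply/norP; split; apply/eqP.
  by move/(phi_eq_unm nma) => E; move: eaw; rewrite E eirr.
by move/(phi_eq_unm nmb) => E; move: wb; rewrite E eqxx.
Qed.

Lemma lowsub : low_sub_no_isolated_edge M D.
Proof.
move=> f Hs Hd.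
case: (psiP f) => eab nc Es Ed.
have nma : ~ matched (psi f).1.
  move=> ma; have nlb := matched_nlow_nb ma eab nc.
  have nmb : ~ matched (psi f).2 by move/matched_low; rewrite (negbTE nlb).
  by move: Hd; rewrite -Ed /mlow mdeg_single // => H; move: nlb; rewrite /low H.
have eba : e (psi f).2 (psi f).1 by rewrite esymm.
have ncb : ~~ contr e (psi f).2 (psi f).1 by rewrite contrC.
have nmb : ~ matched (psi f).2.
  move=> mb; have nla := matched_nlow_nb mb eba ncb.
  by move: Hs; rewrite -Es /mlow mdeg_single // => H; move: nla; rewrite /low H.
have la : low e (psi f).1 by move: Hs; rewrite -Es /mlow mdeg_single.
have lb : low e (psi f).2 by move: Hd; rewrite -Ed /mlow mdeg_single.
have mf : mends f = [set phi (psi f).1; phi (psi f).2] by rewrite /mends Es Ed.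
move: nc; rewrite /contr eab la lb /= negb_and.
case/orP => /forallPn [w]; rewrite negb_imply negbK => /andP [/andP [ew wn] lw].
  case: (low_nb_aux nma nmb eab ew wn lw la) => g [g1 g2 g3 g4 g5].
  exists g; rewrite g1 g2 -Es g3 /=; apply/negP => /eqP E.
  by move: g4; rewrite E mf (negbTE g5).
case: (low_nb_aux nmb nma eba ew wn lw lb) => g [g1 g2 g3 g4 g5].
exists g; rewrite g1 g2 -Ed g3 orbT /=; apply/negP => /eqP E.
by move: g4; rewrite E mf setUC (negbTE g5).
Qed.


Lemma argmax_unm : 0 < D -> exists w, deg e w = D /\ ~ matched w.
Proof.
move=> Dpos.
have : 0 < #|T|.
  case: (pickP (@predT T)) => [w0 _ | none]; first by apply/card_gt0P; exists w0.
  move: Dpos; rewrite /maxdeg big_pred0 //.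
case/(eq_bigmax (deg e)) => w Hw; exists w; split; first by rewrite /maxdeg Hw.
move/matched_low; rewrite /low /maxdeg Hw; lia.
Qed.

Lemma psi_two f u v w : (psi f = (u,v) \/ psi f = (v,u)) ->
  (psi f = (u,w) \/ psi f = (w,u)) -> e u v -> v = w.
Proof.
case=> -> [] [] //.
- by move=> -> ->; rewrite eirr.
- by move=> -> _; rewrite eirr.
Qed.

Variable noiso : no_isolated_edge e.
Variables (p : nat) (p0 : 0 < p) (c : mE M -> 'I_p).
Hypotheses (cpr : forall f g, f != g -> (inc (msrc f) g || inc (mdst f) g) -> c f != c g)
  (cav : forall f, c @: [set g | inc (msrc f) g] != c @: [set g | inc (mdst f) g]).

Local Notation Inc x := [set g | inc x g].

Definition k0 : 'I_p := Ordinal p0.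
Definition alpha x := odflt k0 [pick k | k \notin c @: Inc x].
Definition col u v := if contr e u v then alpha (phi u)
  else odflt k0 (omap c [pick f | (psi f == (u,v)) || (psi f == (v,u))]).

Lemma c_inj x : {in Inc x &, injective c}.
Proof.
move=> f g; rewrite !inE => Hf Hg E; apply/eqP; move/eqP: E; apply: contraTT => ne.
apply: cpr ne _.
by case/orP: Hf => /eqP ->; rewrite Hg ?orbT.
Qed.

Lemma col_edge u v f : ~~ contr e u v -> (psi f = (u,v) \/ psi f = (v,u)) -> col u v = c f.
Proof.
move=> nc Hf; rewrite /col (negbTE nc).
case: pickP => [g Hg | none] /=.
  have Hg' : psi g = (u,v) \/ psi g = (v,u) by case/orP: Hg => /eqP; [left|right].
  by rewrite (psi_inj2 Hg' Hf).
by move: (none f); case: Hf => ->; rewrite eqxx ?orbT.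
Qed.

Lemma col_nc u v : e u v -> ~~ contr e u v ->
  exists f, [/\ col u v = c f, f \in Su u & (psi f = (u,v) \/ psi f = (v,u))].
Proof.
move=> euv nc; case: (psiS euv nc) => f Hf; exists f; split => //.
  exact: col_edge.
by rewrite inE; case: Hf => ->; rewrite eqxx ?orbT.
Qed.

Lemma D_le_p : D <= p.
Proof.
case: (posnP D) => [->//|Dpos].
case: (argmax_unm Dpos) => w [<- nm].
rewrite -Su_eq // -inc_single // -(card_in_imset (@c_inj (phi w))).
apply: leq_trans (max_card _) _; by rewrite card_ord.
Qed.

Lemma alpha_notin u u' : contr e u u' -> alpha (phi u) \notin c @: Inc (phi u).
Proof.
move=> cu; rewrite /alpha; case: pickP => [k //| none] /=.
exfalso.
have H1 : p <= #|c @: Inc (phi u)|.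
  rewrite -{1}(card_ord p); apply: subset_leq_card; apply/subsetP => k _.
  by move: (none k) => /negbFE.
have H2 := leq_imset_card c (Inc (phi u)).
have H3 := mdeg_pair cu.
have l1 := contr_low cu; rewrite contrC in cu; have l2 := contr_low cu.
have H4 := D_le_p.
move: l1 l2; rewrite /low; lia.
Qed.

Lemma col_sym u v : e u v -> col u v = col v u.
Proof.
move=> euv; case: (boolP (contr e u v)) => cuv.
  rewrite /col cuv -contrC cuv.
  by have -> : phi u = phi v by apply/phiE; right.
have ncvu : ~~ contr e v u by rewrite -contrC.
case: (psiS euv cuv) => f Hf.
rewrite (col_edge cuv Hf) (col_edge (f:=f) ncvu) //.
by case: Hf; [right|left].
Qed.

Lemma col_proper u v w : e u v -> e u w -> v != w -> col u v != col u w.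
Proof.
move=> euv euw vw.
case: (boolP (contr e u v)) => cv.
  have cw : ~~ contr e u w by apply/negP => cw; move: vw; rewrite (contr_uniq cv cw) eqxx.
  case: (col_nc euw cw) => g [-> Hg _].
  rewrite /col cv; apply: contraNneq (alpha_notin cv) => ->.
  by apply: imset_f; rewrite inE inc_Su.
case: (boolP (contr e u w)) => cw.
  case: (col_nc euv cv) => g [-> Hg _].
  rewrite eq_sym /col cw; apply: contraNneq (alpha_notin cw) => ->.
  by apply: imset_f; rewrite inE inc_Su.
case: (col_nc euv cv) => f [-> Hf Pf].
case: (col_nc euw cw) => g [-> Hg Pg].
apply/negP => /eqP /(c_inj (x := phi u)) E.
have fg : f = g by apply: E; rewrite inE inc_Su.
rewrite -fg in Pg; move: vw; by rewrite (psi_two Pf Pg euv) eqxx.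
Qed.

Definition Sc u := col u @: [set w | e u w].

Lemma S_single u : ~ matched u -> Sc u = c @: Inc (phi u).
Proof.
move=> nm; have ncu : forall w, ~~ contr e u w.
  by move=> w; apply/negP => cw; apply: nm; exists w.
apply/setP => k; apply/imsetP/imsetP.
  case=> w; rewrite inE => euw ->.
  case: (col_nc euw (ncu w)) => f [-> Hf _]; exists f => //.
  by rewrite inc_single.
case=> f; rewrite inc_single // => Hf ->.
exists (oth u f); first by rewrite inE oth_e.
by apply: esym; apply: col_edge => //; case: (Su_form Hf); [left|right].
Qed.

Lemma one_side u v : contr e u v -> Sc u = Sc v -> deg e u = 1.
Proof.
move=> cuv E.
have euv := contr_e cuv.
have cvu : contr e v u by rewrite -contrC.
have puv : phi u = phi v by apply/phiE; right.
rewrite /deg; suff -> : [set w | e u w] = [set v] by rewrite cards1.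
apply/setP => w; rewrite !inE; apply/idP/idP; last by move/eqP ->.
move=> euw; apply: contraT => wv.
have ncw : ~~ contr e u w.
  by apply/negP => cw; move: wv; rewrite (contr_uniq cuv cw) eqxx.
case: (col_nc euw ncw) => f [Cf Hf Pf].
have : col u w \in Sc v by rewrite -E; apply: imset_f; rewrite inE.
case/imsetP => z; rewrite inE => evz Ez.
case: (eqVneq z u) => [zu | zu].
  move: Ez; rewrite zu /col cvu (negbTE ncw) -puv.
  case: pickP => [g Hg | none] /=.
    have Hg' : psi g = (u,w) \/ psi g = (w,u) by case/orP: Hg => /eqP; [left|right].
    have gS : g \in Su u by rewrite inE; case: Hg' => ->; rewrite eqxx ?orbT.
    move=> Eg; move: (alpha_notin cuv); rewrite -Eg imset_f //.
    by rewrite inE inc_Su.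
  by move: (none f); case: Pf => ->; rewrite eqxx ?orbT.
have ncz : ~~ contr e v z.
  by apply/negP => cz; move: zu; rewrite (contr_uniq cvu cz) eqxx.
case: (col_nc evz ncz) => g [Cg Hg Pg].
have fg : f = g.
  apply: (c_inj (x := phi u)).
  - by rewrite inE inc_Su.
  - by rewrite inE puv inc_Su.
  by rewrite -Cf -Cg.
rewrite -fg in Pg.
move: Pf Pg => [] -> [] [] // => [E1 E2|E1 E2|E1 E2|E1 E2].
- by move: euv; rewrite E1 eirr.
- by move: zu; rewrite E1 eqxx.
- by move: zu; rewrite E2 eqxx.
- by move: euv; rewrite E2 eirr.
Qed.

Lemma mixed u v : matched u -> e u v -> ~~ contr e u v -> Sc u != Sc v.
Proof.
move=> mu euv nc.
have nlv := matched_nlow_nb mu euv nc.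
have lu := matched_low mu.
have H1 : #|Sc u| <= deg e u by apply: leq_imset_card.
have H2 : #|Sc v| = deg e v.
  apply: card_in_imset => a b; rewrite !inE => ea eb E.
  apply/eqP; move/eqP: E; apply: contraTT => ne; exact: col_proper.
apply/negP => /eqP E; move: H1 H2 lu nlv; rewrite E /low; lia.
Qed.

Lemma avd_ok : avd_simple e p.
Proof.
exists col; split.
- exact: col_sym.
- exact: col_proper.
move=> u v euv; change (Sc u != Sc v).
case: (boolP (contr e u v)) => cuv.
  apply/negP => /eqP E.
  have d1 := one_side cuv E.
  have cvu : contr e v u by rewrite -contrC.
  have d2 := one_side cvu (esym E).
  by move: (noiso euv); rewrite d1 d2.
case: (boolP [exists w, contr e u w]) => [/matchedP mu | /matchedP nmu].
  exact: mixed.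
have evu : e v u by rewrite esymm.
have ncvu : ~~ contr e v u by rewrite -contrC.
case: (boolP [exists w, contr e v w]) => [/matchedP mv | /matchedP nmv].
  by rewrite eq_sym; exact: mixed.
rewrite !S_single //.
case: (psiS euv cuv) => f Hf; have := cav f.
case: (psiP f) => _ _ <- <-.
by case: Hf => -> //=; rewrite eq_sym.
Qed.

End Pf.

Theorem mainTheorem2 (T : finType) (e : rel T) :
  symmetric e -> irreflexive e -> no_isolated_edge e ->
  forall G' : mgraph, is_contraction e G' ->
    [/\ loopless G', mult_le2 G', mmaxdeg G' = maxdeg e,
        low_sub_no_isolated_edge G' (maxdeg e) &
        forall p : nat, 0 < p -> avd_multi G' p -> avd_simple e p].
Proof.
move=> esymm eirr noiso G' [phi [psi [phiS phiE psiP psiS psiI]]].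
split.
- move=> f; apply: loop; eassumption.
- apply: mult2; eassumption.
- apply: maxdeg_eq; eassumption.
- apply: lowsub; eassumption.
move=> p p0 [c [cpr cav]]; apply: avd_ok; eassumption.
Qed.
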